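(* Let $G$ be a finite nilpotent group of nilpotency class $2$ and let $w\in F_k$ be such that the word map $w:G^k\to G$ is surjective. Then $w$ is $F_k(G)$-automorphic to the word $x_1$, and $P_{w,G}(g)=|G|^{-1}$ for every $g\in G$; in particular $w$ satisfies the Amit–Ashurst bound $P_{w,G}(g)\ge|G|^{-1}$ for all $g\in G$.
   Context: $F_k$ is the free group on $x_1,\dots,x_k$; $P_{w,G}(g):=|\{(g_1,\dots,g_k)\in G^k: w(g_1,\dots,g_k)=g\}|/|G|^k$. The group $F_k(G)$ consists of the word maps $G^k\to G$ induced by elements of $F_k$, under pointwise multiplication; $w_1,w_2\in F_k$ are $F_k(G)$-automorphic if some group automorphism of $F_k(G)$ sends the word map of $w_1$ to that of $w_2$. *)

(* Defs.v *)
From mathcomp Require Import all_boot all_order all_algebra all_fingroup all_solvable.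
Set Implicit Arguments. Unset Strict Implicit. Unset Printing Implicit Defensive.

(* Elements of the free group F_k on x_1..x_k are represented by (not
   necessarily reduced) words: a letter (i, false) is x_(i+1), a letter
   (i, true) is x_(i+1)^-1.  The word map only depends on the free group
   element, since evaluation respects free reduction. *)
Definition word (k : nat) := seq ('I_k * bool).

Local Open Scope group_scope.

Section WordMaps.
Variables (gT : finGroupType) (k : nat).

Definition tup := {ffun 'I_k -> gT}.

Definition letter_eval (g : tup) (l : 'I_k * bool) : gT :=
  if l.2 then (g l.1)^-1 else g l.1.

Definition word_eval (w : word k) (g : tup) : gT :=
  foldr (fun l acc => letter_eval g l * acc) 1 (w).

Definition word_map (w : word k) : {ffun tup -> gT} := [ffun g => word_eval w g].

Definition pmul (f h : {ffun tup -> gT}) : {ffun tup -> gT} := [ffun g => f g * h g].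

(* membership in F_k(G): f is the word map of some word *)
Definition is_word_map (f : {ffun tup -> gT}) : Prop := exists w : word k, f = word_map w.

Definition FkG_automorphism (phi : {ffun tup -> gT} -> {ffun tup -> gT}) : Prop :=
  [/\ forall f, is_word_map f -> is_word_map (phi f),
      forall f h, is_word_map f -> is_word_map h -> phi f = phi h -> f = h,
      forall h, is_word_map h -> exists2 f, is_word_map f & phi f = h
    & forall f h, is_word_map f -> is_word_map h ->
        phi (pmul f h) = pmul (phi f) (phi h)].

Definition FkG_automorphic (w1 w2 : word k) : Prop :=
  exists phi, FkG_automorphism phi /\ phi (word_map w1) = word_map w2.

Definition Pw (w : word k) (g : gT) : rat :=
  (#|[set t : tup | word_eval w t == g]|%:R / (#|gT| ^ k)%:R)%R.

Definition word_surjective (w : word k) : Prop :=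
  forall g : gT, exists t : tup, word_eval w t = g.
End WordMaps.

Definition x1 (k : nat) (hk : (0 < k)%N) : word k := [:: (Ordinal hk, false)].

Arguments FkG_automorphic gT {k} w1 w2.
Arguments word_surjective gT {k} w.

(* Main.v *)
Require Import Defs.
From mathcomp Require Import all_boot all_order all_algebra all_fingroup all_solvable.
From mathcomp Require Import zify.
Import GRing.Theory Num.Theory.

Set Implicit Arguments. Unset Strict Implicit. Unset Printing Implicit Defensive.

Section Words.
Variables (gT : finGroupType) (k : nat).
Local Open Scope group_scope.
Local Notation ev := (@word_eval gT k).
Local Notation tupT := (tup gT k).

Lemma ev_nil (t : tupT) : ev [::] t = 1. Proof. by []. Qed.
Lemma ev_cons l (w : word k) t : ev (l :: w) t = letter_eval t l * ev w t.
Proof. by []. Qed.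

Lemma ev_cat (u v : word k) t : ev (u ++ v) t = ev u t * ev v t.
Proof. elim: u => [|l u IH] /=; first by rewrite mul1g. by rewrite /word_eval /= -/(ev _ _) IH mulgA. Qed.

Definition winv (w : word k) : word k := rev (map (fun l => (l.1, ~~ l.2)) w).

Lemma ev_winv (w : word k) t : ev (winv w) t = (ev w t)^-1.
Proof.
elim: w => [|l w IH]; first by rewrite /= invg1.
rewrite /winv /= rev_cons -cats1 ev_cat -/(winv w) IH ev_cons invMg; congr (_ * _).
rewrite /word_eval /= mulg1 /letter_eval /=; by case: l.2; rewrite ?invgK.
Qed.

Definition WG (s : 'I_k -> word k) (t : tupT) : tupT := [ffun i => ev (s i) t].

Definition subst (s : 'I_k -> word k) (w : word k) : word k :=
  flatten (map (fun l => if l.2 then winv (s l.1) else s l.1) w).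

Lemma ev_subst s w t : ev (subst s w) t = ev w (WG s t).
Proof.
elim: w => [|l w IH] //=.
rewrite /subst /= ev_cat -/(subst s w) IH. congr (_ * _).
rewrite /letter_eval /WG ffunE; case: l.2 => //; by rewrite ev_winv.
Qed.

Definition idw (i : 'I_k) : word k := [:: (i, false)].

Lemma WG_id t : WG idw t = t.
Proof. by apply/ffunP=> i; rewrite ffunE /idw /word_eval /= mulg1. Qed.

Lemma WG_comp s s' t : WG (fun i => subst s' (s i)) t = WG s (WG s' t).
Proof. by apply/ffunP=> i; rewrite !ffunE ev_subst. Qed.

Lemma WG_iter s n : exists s', forall t, WG s' t = iter n (WG s) t.
Proof.
elim: n => [|n [s' IH]]; first by exists idw => t; rewrite WG_id.
exists (fun i => subst s' (s i)) => t; by rewrite WG_comp IH.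
Qed.

Lemma WG_inv s : injective (WG s) ->
  exists s', forall t, WG s' (WG s t) = t /\ WG s (WG s' t) = t.
Proof.
move=> inj; pose p := perm inj.
have [s' Hs'] := WG_iter s (#[p].-1).
have key : forall t, iter #[p] (WG s) t = t.
  move=> t; rewrite -(eq_iter (f := p)); last by move=> x; rewrite permE.
  by rewrite -permX expg_order perm1.
have o0 : (0 < #[p])%N := order_gt0 p.
exists s' => t; split.
  by rewrite Hs' -iterSr prednK // key.
by rewrite Hs' -iterS prednK // key.
Qed.

Definition reach (w w' : word k) :=
  exists s, injective (WG s) /\ forall t, ev w' t = ev w (WG s t).

Lemma reach_refl w : reach w w.
Proof. exists idw; split; last by move=> t; rewrite WG_id.
by move=> x y; rewrite !WG_id. Qed.

Lemma reach_trans w1 w2 w3 : reach w1 w2 -> reach w2 w3 -> reach w1 w3.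
Proof.
move=> [s [i1 h1]] [s' [i2 h2]]; exists (fun i => subst s' (s i)); split.
  by move=> x y; rewrite !WG_comp => /i1 /i2.
by move=> t; rewrite h2 h1 WG_comp.
Qed.

End Words.

Section Exps.
Variables (gT : finGroupType) (k : nat).
Local Notation ev := (@word_eval gT k).
Local Notation tupT := (tup gT k).
Local Open Scope ring_scope.

Definition cl (l : 'I_k * bool) (i : 'I_k) : int :=
  if l.1 == i then (if l.2 then -1 else 1) else 0.

Definition ex (w : word k) (i : 'I_k) : int := \sum_(l <- w) cl l i.

Lemma ex_cat u v i : ex (u ++ v) i = ex u i + ex v i.
Proof. by rewrite /ex big_cat. Qed.

Lemma ex_winv w i : ex (winv w) i = - ex w i.
Proof.
rewrite /ex /winv big_rev big_map -sumrN; apply: eq_bigr => l _.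
by rewrite /cl /=; case: (l.1 == i); case: l.2; rewrite ?opprK ?oppr0.
Qed.

Lemma ex_subst s w x :
  ex (subst s w) x = \sum_(l <- w) (if l.2 then - ex (s l.1) x else ex (s l.1) x).
Proof.
elim: w => [|l w IH]; first by rewrite /ex !big_nil.
rewrite /subst /= ex_cat -/(subst s w) IH big_cons; congr (_ + _).
by case: l.2; rewrite ?ex_winv.
Qed.

Definition mv (i j : 'I_k) (b : bool) (l : 'I_k) : word k :=
  if l == i then [:: (i, false); (j, b)] else [:: (l, false)].

Definition sgnb (b : bool) : int := if b then -1 else 1.

Lemma ex_mv i j b w x : i != j ->
  ex (subst (mv i j b) w) x = ex w x + (if j == x then sgnb b * ex w i else 0).
Proof.
move=> ij; rewrite ex_subst /ex.
have -> : (if j == x then sgnb b * \sum_(l <- w) cl l i else 0)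
   = \sum_(l <- w) (if j == x then sgnb b * cl l i else 0).
  case: (j == x) => /=; [by rewrite big_distrr | by rewrite big1].
rewrite -big_split /=; apply: eq_bigr => -[a c] _ /=.
have ji : j != i by rewrite eq_sym.
rewrite /mv; case: (a =P i) => [->|/eqP ai].
  rewrite ?eqxx !big_cons !big_nil /cl /=.
  case: (i =P x) => [<-|/eqP ix]; case: (j =P x) => [jx|/eqP jx];
   case: b; case: c; rewrite /sgnb ?eqxx ?(negbTE ij) ?(negbTE ji) ?(negbTE ix) ?(negbTE jx) /=;
   try subst; rewrite ?eqxx ?(negbTE ij) ?(negbTE ji) ?(negbTE ix) /=; lia.
rewrite !big_cons !big_nil /cl /= ?(negbTE ai).
case: (a =P x) => [ax|/eqP ax]; case: (j =P x) => [jx|/eqP jx]; case: b; case: c; rewrite /sgnb /= ?(negbTE ai) /=; lia.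
Qed.

Lemma mv_inj i j b : i != j -> injective (@WG gT k (mv i j b)).
Proof.
move=> ij t t' /ffunP H.
have Hl : forall l, l != i -> t l = t' l.
  move=> l li; have := H l; rewrite !ffunE /mv (negbTE li) /word_eval /= /letter_eval /=.
  by rewrite !mulg1.
apply/ffunP => l; case: (l =P i) => [->|/eqP]; last exact: Hl.
have := H i; rewrite !ffunE /mv eqxx /word_eval /= /letter_eval /= !mulg1.
rewrite (Hl j); last by rewrite eq_sym.
exact: mulIg.
Qed.

Lemma reach_mv i j b w : i != j -> reach gT w (subst (mv i j b) w).
Proof.
by move=> ij; exists (mv i j b); split; [exact: mv_inj | move=> t; rewrite ev_subst].
Qed.

End Exps.

Section Euclid.
Variables (gT : finGroupType) (k : nat).
Local Open Scope ring_scope.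

Definition mu (i0 : 'I_k) (w : word k) : nat :=
  (2 * \sum_(l : 'I_k) absz (ex w l) + (ex w i0 == 0))%N.

Lemma sum2 (f g : 'I_k -> nat) a b : a != b ->
  (forall x, x != a -> x != b -> f x = g x) ->
  (\sum_x f x + g a + g b = \sum_x g x + f a + f b)%N.
Proof.
move=> ab H.
have E : forall h : 'I_k -> nat,
    \sum_x h x = (h a + h b + \sum_(x | (x != a) && (x != b)) h x)%N.
  by move=> h; rewrite (bigD1 a) //= (bigD1 b) 1?eq_sym //= addrA.
rewrite (E f) (E g).
rewrite (eq_bigr g); last by move=> x /andP[xa xb]; apply: H.
move: (\sum_(x | (x != a) && (x != b)) g x) => S.
lia.
Qed.

Lemma mu_lt i0 l (w w' : word k) : l != i0 ->
  (forall x, x != i0 -> x != l -> ex w' x = ex w x) ->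
  (2 * (absz (ex w' i0) + absz (ex w' l)) + (ex w' i0 == 0) <
   2 * (absz (ex w i0) + absz (ex w l)) + (ex w i0 == 0))%N ->
  (mu i0 w' < mu i0 w)%N.
Proof.
move=> li H lt; rewrite /mu.
have := @sum2 (fun x => absz (ex w x)) (fun x => absz (ex w' x)) i0 l.
rewrite eq_sym li => /(_ isT) S.
have {}S := S (fun x a b => congr1 absz (esym (H x a b))).
move: S lt; set A := (\sum_(x < k) absz (ex w x))%N; set B := (\sum_(x < k) absz (ex w' x))%N.
lia.
Qed.

Lemma euclid i0 n (w : word k) : (mu i0 w < n)%N ->
  exists w', reach gT w w' /\ forall l, l != i0 -> ex w' l = 0.
Proof.
elim: n w => [|n IH] w //= Hmu.
case: (pickP (fun l => (l != i0) && (ex w l != 0))) => [l /andP[li0 el]|none]; last first.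
  exists w; split; first exact: reach_refl.
  move=> l li; apply/eqP; have := none l; rewrite li /=; exact: negbFE.
have i0l : i0 != l by rewrite eq_sym.
have finish : forall w1, reach gT w w1 -> (mu i0 w1 < mu i0 w)%N ->
    exists w', reach gT w w' /\ forall l, l != i0 -> ex w' l = 0.
  move=> w1 r1 lt1; have [|w' [r' h']] := IH w1; first by lia.
  by exists w'; split => //; exact: reach_trans r1 r'.
case: (ex w i0 =P 0) => [a0|/eqP a0].
  pose w1 := subst (mv l i0 false) w; pose w2 := subst (mv i0 l true) w1.
  have e1 x : ex w1 x = ex w x + (if i0 == x then ex w l else 0).
    by rewrite ex_mv // /sgnb mul1r.
  have e2 x : ex w2 x = ex w1 x + (if l == x then - ex w1 i0 else 0).
    by rewrite ex_mv // /sgnb mulN1r.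
  apply: (finish w2); first exact: (reach_trans (reach_mv gT false w li0) (reach_mv gT true w1 i0l)).
  apply: (mu_lt li0).
    move=> x xi xl; rewrite e2 e1 [l == x]eq_sym [i0 == x]eq_sym (negbTE xl) (negbTE xi); lia.
  rewrite !e2 !e1 !eqxx (negbTE li0) (negbTE i0l) a0 /=.
  move: el; rewrite -/(ex w l); lia.
case: (leqP (absz (ex w i0)) (absz (ex w l))) => hab.
  pose bb := (0 < ex w i0 * ex w l).
  pose w1 := subst (mv i0 l bb) w.
  have e1 x : ex w1 x = ex w x + (if l == x then sgnb bb * ex w i0 else 0).
    by rewrite ex_mv.
  apply: (finish w1); first exact: (reach_mv gT bb w i0l).
  apply: (mu_lt li0).
    move=> x xi xl; rewrite e1 [l == x]eq_sym (negbTE xl); lia.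
  rewrite !e1 eqxx (negbTE li0) /sgnb /bb.
  case: ifP => hs; lia.
pose bb := (0 < ex w i0 * ex w l).
pose w1 := subst (mv l i0 bb) w.
have e1 x : ex w1 x = ex w x + (if i0 == x then sgnb bb * ex w l else 0).
  by rewrite ex_mv.
apply: (finish w1); first exact: (reach_mv gT bb w li0).
apply: (mu_lt li0).
  move=> x xi xl; rewrite e1 [i0 == x]eq_sym (negbTE xi); lia.
rewrite !e1 eqxx (negbTE i0l) /sgnb /bb.
case: ifP => hs; lia.
Qed.

End Euclid.

Section Zexp.
Variable (aT : finGroupType).
Local Open Scope group_scope.

Definition zexp (M : nat) (y : aT) (z : int) : aT := y ^+ absz (z %% M)%Z.

Variables (M : nat) (y : aT).
Hypotheses (M0 : (0 < M)%N) (yM : y ^+ M = 1).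

Lemma zexp_nat n : zexp M y (Posz n) = y ^+ n.
Proof. by rewrite /zexp modz_nat absz_nat expg_mod. Qed.

Lemma zexpD a b : zexp M y (a + b)%R = zexp M y a * zexp M y b.
Proof.
rewrite /zexp -expgD -[RHS](expg_mod _ yM); congr (_ ^+ _).
have M0' : (Posz M != 0)%R by rewrite eqz_nat -lt0n.
apply/eqP; rewrite -eqz_nat -modz_nat PoszD !abszE !ger0_norm ?modz_ge0 //.
by rewrite modzDm.
Qed.

Lemma zexp0 : zexp M y 0 = 1.
Proof. by rewrite zexp_nat expg0. Qed.

Lemma zexp1 : zexp M y 1 = y.
Proof. by rewrite zexp_nat expg1. Qed.

Lemma zexpN1 : zexp M y (-1)%R = y^-1.
Proof.
apply: (mulIg y); rewrite mulVg -{2}zexp1 -zexpD.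
by have -> : (-1 + 1 = 0 :> int)%R by []; rewrite zexp0.
Qed.

End Zexp.

Section EvUpd.
Variables (aT : finGroupType) (k : nat).
Local Open Scope group_scope.

Definition upd (t : tup aT k) (j : 'I_k) (v : aT) : tup aT k :=
  [ffun i => if i == j then v else t i].

Lemma ev_upd M (t : tup aT k) j (y : aT) (w : word k) :
  (0 < M)%N -> y ^+ M = 1 -> (forall x, commute x y) ->
  word_eval w (upd t j (t j * y)) = word_eval w t * zexp M y (ex w j).
Proof.
move=> M0 yM cy.
elim: w => [|[a c] w IH].
  by rewrite /ex big_nil /word_eval /= mul1g zexp0.
rewrite ev_cons IH ev_cons /ex big_cons -/(ex w j) zexpD // /cl /=.
rewrite /letter_eval /= /upd ffunE.
case: (a =P j) => [->|_].
  case: c.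
    rewrite zexpN1 // invMg.
    set E := word_eval w t; set Z := zexp M y (ex w j).
    rewrite !mulgA; congr (_ * _); rewrite -mulgA; symmetry; exact: commuteV (cy _).
  have -> : zexp M y 1 = y by exact: zexp1.
  set E := word_eval w t; set Z := zexp M y (ex w j).
  by rewrite !mulgA; congr (_ * _); rewrite -!mulgA (cy E).
have -> : zexp M y 0 = 1 by exact: zexp0.
by rewrite mul1g mulgA.
Qed.

Lemma ev_one (w : word k) : word_eval w [ffun _ => (1 : aT)] = 1.
Proof.
elim: w => [|l w IH] //; rewrite ev_cons IH mulg1 /letter_eval ffunE.
by case: l.2; rewrite ?invg1.
Qed.

End EvUpd.

Section EvAb.
Variables (aT : finGroupType) (k : nat).
Local Open Scope group_scope.

Lemma ev_ab M (w : word k) (i0 : 'I_k) (s : tup aT k) :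
  (0 < M)%N -> (forall y : aT, y ^+ M = 1) -> (forall x y : aT, commute x y) ->
  (forall l, l != i0 -> ex w l = 0%R) ->
  word_eval w s = zexp M (s i0) (ex w i0).
Proof.
move=> M0 yM cab z0.
pose b : tup aT k := [ffun i => if i == i0 then s i0 else 1].
pose T (l : seq 'I_k) : tup aT k := [ffun i => if i \in l then s i else b i].
have HT : forall l, uniq l -> i0 \notin l -> word_eval w (T l) = word_eval w b.
  elim=> [|j l IH] /=.
    by move=> _ _; congr (word_eval w _); apply/ffunP=> i; rewrite !ffunE.
  move=> /andP[jl ul]; rewrite in_cons negb_or => /andP[ij il].
  have -> : T (j :: l) = upd (T l) j (T l j * s j).
    apply/ffunP=> i; rewrite /upd /T !ffunE in_cons.
    case: (i =P j) => [->|_] /=; last by [].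
    by rewrite (negbTE jl) [j == i0]eq_sym (negbTE ij) mul1g.
  rewrite (ev_upd (M := M)) ?yM //; try by move=> x; apply: cab.
  by rewrite z0 ?(eq_sym j) // (zexp0 (yM _)) mulg1 IH.
have Hs : T [seq i <- enum 'I_k | i != i0] = s.
  apply/ffunP=> i; rewrite /T !ffunE mem_filter mem_enum andbT.
  by case: (i =P i0) => [->|].
rewrite -{1}Hs HT; last (by rewrite mem_filter eqxx); last by rewrite filter_uniq // enum_uniq.
have -> : b = upd [ffun _ => 1] i0 ([ffun _ => (1 : aT)] i0 * s i0).
  by apply/ffunP=> i; rewrite /upd /b !ffunE mul1g.
rewrite (ev_upd (M := M)) ?yM //; try by move=> x; apply: cab.
by rewrite ev_one mul1g.
Qed.

End EvAb.

Section Group.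
Variables (gT : finGroupType).
Local Open Scope group_scope.

Hypotheses (nilG : nilpotent [set: gT]) (cl2 : (nil_class [set: gT] <= 2)%N).

Local Notation Hd := (([set: gT]%G)^`(1))%G.

Lemma central c z : c \in Hd -> commute c z.
Proof.
move=> cH; apply/commgP.
have L3 := (lcn_nil_classP 2 nilG cl2).
have : [~ c, z] \in 'L_3([set: gT]).
  rewrite lcnSn lcnSn lcn1; apply: mem_commg; last exact: in_setT.
  exact: cH.
by rewrite L3 inE.
Qed.

Lemma inN x : x \in 'N(Hd).
Proof. exact: (subsetP (der_norm 1 [set: gT]%G)) (in_setT x). Qed.

Local Notation q := (coset Hd).

Lemma qM x y : q (x * y) = q x * q y.
Proof. by rewrite morphM ?inN. Qed.

Lemma qV x : q (x^-1) = (q x)^-1.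
Proof. by rewrite morphV ?inN. Qed.

Lemma qX x n : q (x ^+ n) = (q x) ^+ n.
Proof. by rewrite morphX ?inN. Qed.

Lemma qab (a b : coset_of Hd) : commute a b.
Proof.
rewrite -(coset_reprK a) -(coset_reprK b).
set x := repr a; set y := repr b.
rewrite /commute -qM (commgC x y) (qM (y * x)) (coset_id (x := [~ x, y])) ?mulg1 ?qM //.
exact: mem_commg (in_setT x) (in_setT y).
Qed.

Lemma xN (x : gT) : x ^+ #|gT| = 1.
Proof. by rewrite -cardsT expg_cardG ?in_setT. Qed.

Lemma qN (a : coset_of Hd) : a ^+ #|gT| = 1.
Proof. by rewrite -(coset_reprK a) -qX xN morph1. Qed.

Lemma q_ev k (w : word k) t : q (word_eval w t) = word_eval w [ffun i => q (t i)].
Proof.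
elim: w => [|l w IH]; first by rewrite /word_eval /= morph1.
rewrite !ev_cons qM IH /letter_eval ffunE; by case: l.2; rewrite ?qV.
Qed.

End Group.

Section Key.
Variables (gT : finGroupType).
Local Open Scope group_scope.
Hypotheses (nilG : nilpotent [set: gT]) (cl2 : (nil_class [set: gT] <= 2)%N).
Local Notation Hd := (([set: gT]%G)^`(1))%G.
Local Notation q := (coset Hd).

Lemma key k (w : word k) (i0 : 'I_k) : word_surjective gT w ->
  exists s, injective (@WG gT k s) /\ forall t : tup gT k, word_eval w (WG s t) = t i0.
Proof.
move=> wsurj.
have [w' [[s1 [inj1 h1]] z0]] := @euclid gT k i0 (mu i0 w).+1 w (ltnSn _).
set N := #|gT|.
have N0 : (0 < N)%N by rewrite /N -cardsT cardG_gt0.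
set D := absz ((ex w' i0) %% N)%Z.
have [s1' c1] := WG_inv inj1.
have surj' : forall g : gT, exists t : tup gT k, word_eval w' t = g.
  move=> g; have [t ht] := wsurj g; exists (WG s1' t); by rewrite h1 (c1 t).2.
have evG : forall (t : tup gT k) y, y \in Hd ->
    word_eval w' (upd t i0 (t i0 * y)) = word_eval w' t * y ^+ D.
  move=> t y yH.
  exact: (@ev_upd gT k N t i0 y w' N0 (xN y)
            (fun x => commute_sym (central nilG cl2 x yH))).
have qev : forall t : tup gT k, q (word_eval w' t) = (q (t i0)) ^+ D.
  move=> t; rewrite q_ev (ev_ab (M:=N) (i0:=i0)) //; first by rewrite ffunE.
    exact: qN.
  exact: qab.
have Psurj : forall a : coset_of Hd, exists b : coset_of Hd, b ^+ D == a.
  move=> a; have [t ht] := surj' (repr a); exists (q (t i0)).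
  by rewrite -qev ht coset_reprK.
have Pinj : injective (fun a : coset_of Hd => a ^+ D).
  pose h a := xchoose (Psurj a).
  have hK : cancel h (fun a => a ^+ D) := fun a => eqP (xchooseP (Psurj a)).
  have [h' h'K Kh'] := injF_bij (can_inj hK).
  move=> a b /= E; rewrite -(Kh' a) -(Kh' b) !hK in E.
  by rewrite -(Kh' a) -(Kh' b) E.
have [m [m0 [Hma Hmy]]] : exists m, (0 < m)%N /\ (forall a : coset_of Hd, a ^+ m = a)
    /\ (forall y : gT, y ^+ D = 1 -> y ^+ m = 1).
  pose p := perm Pinj; pose r := #[p].
  have r0 : (0 < r)%N := order_gt0 p.
  exists (D ^ r + N)%N; split; first by rewrite addn_gt0 N0 orbT.
  split.
    move=> a; rewrite expgD qN mulg1.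
    have iterE : forall n, iter n p a = a ^+ (D ^ n).
      elim=> [|n IH] /=; first by rewrite expg1.
      by rewrite IH permE expnSr expgM.
    by rewrite -iterE -permX expg_order perm1.
  move=> y yD; rewrite expgD xN mulg1 -(prednK r0) expnS expgM yD expg1n.
  by [].
have Hm1 : forall x : gT, x ^+ m.-1 \in Hd.
  move=> x; apply: coset_idr; first exact: inN.
  apply: (mulIg (q x)); rewrite mul1g -qM -expgSr prednK // qX Hma.
  by [].
have Hc : forall c, c \in Hd -> c ^+ m.-1 = 1.
  move=> c cH; have : c \in <<commg_set [set: gT] [set: gT]>> by exact: cH.
  move=> /gen_prodgP [n [f Hf ->]].
  suff: ((\prod_i f i) \in Hd) && ((\prod_i f i) ^+ m.-1 == 1) by case/andP => _ /eqP.
  apply: (big_ind (fun z => (z \in Hd) && (z ^+ m.-1 == 1))).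
  - by rewrite group1 expg1n eqxx.
  - move=> a b /andP[aH /eqP ae] /andP[bH /eqP be].
    rewrite groupM // expgMn ?ae ?be ?mulg1 ?eqxx //.
    exact: (central nilG cl2 b aH).
  - move=> i _; have := Hf i; case/imset2P => x y _ _ ->.
    have cxy : [~ x, y] \in Hd by exact: mem_commg (in_setT x) (in_setT y).
    rewrite cxy -commXg; last exact: commute_sym (central nilG cl2 x cxy).
    apply/commgP; exact: (central nilG cl2 y (Hm1 x)).
have Hinj : forall y, y \in Hd -> y ^+ D = 1 -> y = 1.
  move=> y yH yD; have := Hmy y yD; rewrite -(prednK m0) expgSr (Hc y yH) mul1g.
  by [].
pose sP (i : 'I_k) : word k := if i == i0 then w' else idw i.
have WP : forall t : tup gT k, WG sP t = upd t i0 (word_eval w' t).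
  move=> t; apply/ffunP=> i; rewrite /WG /upd !ffunE /sP.
  by case: (i == i0) => //; rewrite /idw /word_eval /= mulg1.
have injP : injective (@WG gT k sP).
  move=> t t'; rewrite !WP => E.
  have Ei : forall i, i != i0 -> t i = t' i.
    move=> i ii; have := congr1 (fun f : tup gT k => f i) E; by rewrite /upd !ffunE (negbTE ii).
  have Ee : word_eval w' t = word_eval w' t'.
    have := congr1 (fun f : tup gT k => f i0) E; by rewrite /upd !ffunE eqxx.
  pose y := (t i0)^-1 * t' i0.
  have yH : y \in Hd.
    apply: coset_idr; first exact: inN.
    rewrite qM qV; have := congr1 q Ee; rewrite !qev => /Pinj ->.
    by rewrite mulVg.
  have Et' : t' = upd t i0 (t i0 * y).
    apply/ffunP=> i; rewrite /upd ffunE.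
    by case: (i =P i0) => [->|/eqP ii]; [rewrite /y mulKVg | rewrite Ei].
  have yD : y ^+ D = 1.
    apply: (mulgI (word_eval w' t)); rewrite -evG // -Et' -Ee mulg1.
    by [].
  have y1 := Hinj y yH yD.
  apply/ffunP=> i; case: (i =P i0) => [->|/eqP ii]; last exact: Ei.
  by rewrite Et' /upd ffunE eqxx y1 mulg1.
have [sP' cP] := WG_inv injP.
exists (fun i => subst sP' (s1 i)); split.
  move=> x y; rewrite !WG_comp => /inj1 /(congr1 (WG sP)).
  by rewrite !(cP _).2.
move=> t; rewrite WG_comp -h1.
have := (cP t).2; rewrite WP => /(congr1 (fun f : tup gT k => f i0)).
by rewrite /upd ffunE eqxx.
Qed.

End Key.

Lemma card_fix (gT : finGroupType) k (i0 : 'I_k) (g : gT) :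
  #|[set t : tup gT k | t i0 == g]| = (#|gT| ^ k.-1)%N.
Proof.
pose F (i : 'I_k) : pred gT := if i == i0 then pred1 g else predT.
have -> : #|[set t : tup gT k | t i0 == g]| = foldr muln 1 [seq #|F x| | x : 'I_k].
  apply: etrans _ (card_family F); apply: eq_card => t; rewrite inE; apply/eqP/familyP.
    by move=> E x; rewrite /F; case: (x =P i0) => [->|] //=; rewrite E inE.
  by move=> /(_ i0); rewrite /F eqxx inE => /eqP.
rewrite foldrE big_map big_enum /= (bigD1 i0) //= /F eqxx.
rewrite (eq_bigr (fun _ => #|gT|)); last by move=> i /negbTE ->; rewrite cardT.
rewrite prod_nat_const card1 mul1n; congr (_ ^ _).
transitivity #|predC1 i0|; first by apply: eq_card => i; rewrite !inE.
by rewrite cardC1 card_ord.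
Qed.

Theorem corollary3p6 (gT : finGroupType) (k : nat) (hk : (0 < k)%N) (w : word k) :
  nilpotent [set: gT] -> nil_class [set: gT] = 2 ->
  word_surjective gT w ->
  [/\ FkG_automorphic gT w (x1 hk),
      (forall g : gT, Pw w g = (#|gT|%:R)^-1)%R
    & (forall g : gT, (#|gT|%:R)^-1 <= Pw w g)%R].
Proof.
move=> nilG cl wsurj.
have cl2 : (nil_class [set: gT] <= 2)%N by rewrite cl.
pose i0 := Ordinal hk.
have [s [injs hs]] := key nilG cl2 i0 wsurj.
have [s' cs] := WG_inv injs.
have Peq : forall g : gT, Pw w g = (#|gT|%:R)^-1%R.
  move=> g; rewrite /Pw.
  have -> : [set t : tup gT k | word_eval w t == g] = WG s @: [set t : tup gT k | t i0 == g].
    apply/setP => t; rewrite inE; apply/idP/imsetP.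
      move=> /eqP E; exists (WG s' t); last by rewrite (cs t).2.
      by rewrite inE -hs (cs t).2 E.
    by case=> u; rewrite inE => /eqP ug ->; rewrite hs ug.
  rewrite card_imset // card_fix.
  have N0 : (0 < #|gT|)%N by rewrite -cardsT cardG_gt0.
  rewrite -{2}(prednK hk) expnSr natrM invfM mulrA divff ?mul1r //.
  by rewrite pnatr_eq0 -lt0n expn_gt0 N0.
split=> //; last by move=> g; rewrite Peq.
exists (fun F : {ffun tup gT k -> gT} => [ffun t => F (WG s t)]); split.
  split.
  - move=> f [u ->]; exists (subst s u); apply/ffunP=> t.
    by rewrite /word_map !ffunE ev_subst.
  - move=> f h _ _ E; apply/ffunP => t.
    have := congr1 (fun F : {ffun tup gT k -> gT} => F (WG s' t)) E.
    by rewrite !ffunE (cs t).2.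
  - move=> h [u ->]; exists (@word_map gT k (subst s' u)); first by exists (subst s' u).
    by apply/ffunP=> t; rewrite /word_map !ffunE ev_subst (cs t).1.
  - by move=> f h _ _; apply/ffunP=> t; rewrite /pmul !ffunE.
apply/ffunP=> t; rewrite /word_map !ffunE hs /x1 /word_eval /= mulg1.
by [].
Qed.
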